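(* Let $F:\mathbb{R}^{n_x}\times\mathbb{R}^{n_z}\to\mathbb{R}$ be convex and continuously differentiable, $X\subset\mathbb{R}^{n_x}$ convex and compact, $Z\subseteq\mathbb{R}^{n_z}$ closed and convex, and suppose that for each $x\in X$ the map $z\mapsto F(x,z)$ is inf-compact on $Z$. Fix $\beta,\sigma\in(0,1)$. Let $\{(x^k,z^k,d^k)\}_{k\ge0}$ with $x^k\in X$, $z^k\in Z$ satisfy the Direction Assumption, the Gradient Related Assumption and the Sufficient Decrease Assumption. Then $\{(x^k,z^k)\}$ has limit points, and every limit point $(\bar x,\bar z)$ satisfies $F'_x(\bar x,\bar z;d)\ge0$ for all $d\in X-\{\bar x\}$.
   Context: $F'_x(x,z;d)=\lim_{\alpha\downarrow0}\frac{F(x+\alpha d,z)-F(x,z)}{\alpha}$ denotes the directional derivative in $x$. A function $g$ is inf-compact on $Z$ if $\{z\in Z: g(z)\le\ell\}$ is compact for every $\ell\in\mathbb{R}$. $X-\{x\}=\{y-x: y\in X\}$. Direction Assumption (DA): for each $k\ge0$, $x^k+d^k\in X$ and $F'_x(x^k,z^k;d^k)<0$. Gradient Related Assumption (GRA): whenever a subsequence $\{(x^k,z^k)\}_{k\in\mathcal{K}}$ converges to some $(\bar x,\bar z)$ and there exists $\bar d\in X-\{\bar x\}$ with $F'_x(\bar x,\bar z;\bar d)<0$, then $\limsup_{k\to\infty,k\in\mathcal{K}}F'_x(x^k,z^k;d^k)<0$. Armijo step: $\alpha^k$ is the largest element of $\{1,\beta,\beta^2,\dots\}$ such that $F(x^k+\alpha^k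 d^k,z^k)-F(x^k,z^k)\le\alpha^k\sigma F'_x(x^k,z^k;d^k)$. Sufficient Decrease Assumption (SDA): $F(x^{k+1},z^{k+1})\le F(x^k+\alpha^kd^k,z^k)$ for all $k\ge0$. *)

(* Defs.v *)
From Stdlib Require Import Reals Lra List ClassicalEpsilon.
From Stdlib Require Vectors.Fin.
Open Scope R_scope.

Definition vec (n : nat) := Fin.t n -> R.

Fixpoint vsum (n : nat) : (Fin.t n -> R) -> R :=
  match n return (Fin.t n -> R) -> R with
  | O => fun _ => 0
  | S m => fun f => f Fin.F1 + vsum m (fun i => f (Fin.FS i))
  end.

Definition vadd {n} (u v : vec n) : vec n := fun i => u i + v i.
Definition vsub {n} (u v : vec n) : vec n := fun i => u i - v i.
Definition vscal {n} (a : R) (u : vec n) : vec n := fun i => a * u i.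
Definition vdot {n} (u v : vec n) : R := vsum n (fun i => u i * v i).
Definition vnorm {n} (u : vec n) : R := sqrt (vdot u u).
Definition pnorm {nx nz} (u : vec nx) (w : vec nz) : R :=
  sqrt (vdot u u + vdot w w).

Definition is_open {n} (U : vec n -> Prop) : Prop :=
  forall p, U p -> exists r, 0 < r /\ forall q, vnorm (vsub q p) < r -> U q.
Definition is_closed {n} (S : vec n -> Prop) : Prop :=
  is_open (fun p => ~ S p).
Definition is_compact {n} (S : vec n -> Prop) : Prop :=
  forall (I : Type) (U : I -> vec n -> Prop),
    (forall i, is_open (U i)) ->
    (forall p, S p -> exists i, U i p) ->
    exists l : list I, forall p, S p -> exists i, In i l /\ U i p.
Definition is_convex_set {n} (S : vec n -> Prop) : Prop :=
  forall p q t, S p -> S q -> 0 <= t <= 1 ->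
    S (vadd (vscal t p) (vscal (1 - t) q)).

Definition convex_fun {nx nz} (F : vec nx -> vec nz -> R) : Prop :=
  forall x1 z1 x2 z2 t, 0 <= t <= 1 ->
    F (vadd (vscal t x1) (vscal (1 - t) x2)) (vadd (vscal t z1) (vscal (1 - t) z2))
    <= t * F x1 z1 + (1 - t) * F x2 z2.

Definition cont_diff {nx nz} (F : vec nx -> vec nz -> R) : Prop :=
  exists (gx : vec nx -> vec nz -> vec nx) (gz : vec nx -> vec nz -> vec nz),
    (forall x z eps, 0 < eps -> exists delta, 0 < delta /\
       forall hx hz, pnorm hx hz < delta ->
         Rabs (F (vadd x hx) (vadd z hz) - F x z - vdot (gx x z) hx - vdot (gz x z) hz)
           <= eps * pnorm hx hz) /\
    (forall x z eps, 0 < eps -> exists delta, 0 < delta /\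
       forall x' z', pnorm (vsub x' x) (vsub z' z) < delta ->
         vnorm (vsub (gx x' z') (gx x z)) < eps /\
         vnorm (vsub (gz x' z') (gz x z)) < eps).

Definition inf_compact {n} (g : vec n -> R) (Z : vec n -> Prop) : Prop :=
  forall l : R, is_compact (fun z => Z z /\ g z <= l).

Definition is_dirderiv {nx nz} (F : vec nx -> vec nz -> R) x z (d : vec nx) (l : R)
  : Prop :=
  forall eps, 0 < eps -> exists delta, 0 < delta /\
    forall a, 0 < a < delta ->
      Rabs ((F (vadd x (vscal a d)) z - F x z) / a - l) < eps.

(* F'_x(x,z;d): the limit (which is unique when it exists) *)
Definition dirderiv {nx nz} (F : vec nx -> vec nz -> R) x z (d : vec nx) : R :=
  epsilon (inhabits 0) (fun l => is_dirderiv F x z d l).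

(* Armijo step: a is the largest element of {1, beta, beta^2, ...}
   satisfying the Armijo condition *)
Definition armijo_cond {nx nz} (F : vec nx -> vec nz -> R) (sigma : R) x z d (a : R)
  : Prop :=
  F (vadd x (vscal a d)) z - F x z <= a * sigma * dirderiv F x z d.
Definition armijo_step {nx nz} (F : vec nx -> vec nz -> R) (beta sigma : R) x z d
  (a : R) : Prop :=
  exists m : nat, a = beta ^ m /\ armijo_cond F sigma x z d a /\
    forall m', (m' < m)%nat -> ~ armijo_cond F sigma x z d (beta ^ m').

Definition strict_incr (phi : nat -> nat) : Prop := forall j, (phi j < phi (S j))%nat.
Definition pconverges {nx nz} (x : nat -> vec nx) (z : nat -> vec nz) xb zb : Prop :=
  forall eps, 0 < eps -> exists N, forall j, (N <= j)%nat ->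
    pnorm (vsub (x j) xb) (vsub (z j) zb) < eps.
Definition is_limit_point {nx nz} (x : nat -> vec nx) (z : nat -> vec nz) xb zb : Prop :=
  exists phi, strict_incr phi /\
    pconverges (fun j => x (phi j)) (fun j => z (phi j)) xb zb.

Definition DA {nx nz} (F : vec nx -> vec nz -> R) (X : vec nx -> Prop)
  (x : nat -> vec nx) (z : nat -> vec nz) (d : nat -> vec nx) : Prop :=
  forall k, X (vadd (x k) (d k)) /\ dirderiv F (x k) (z k) (d k) < 0.

Definition limsup_neg (u : nat -> R) : Prop :=
  exists c, c < 0 /\ exists N, forall j, (N <= j)%nat -> u j <= c.

Definition GRA {nx nz} (F : vec nx -> vec nz -> R) (X : vec nx -> Prop)
  (x : nat -> vec nx) (z : nat -> vec nz) (d : nat -> vec nx) : Prop :=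
  forall phi xb zb, strict_incr phi ->
    pconverges (fun j => x (phi j)) (fun j => z (phi j)) xb zb ->
    (exists db, X (vadd xb db) /\ dirderiv F xb zb db < 0) ->
    limsup_neg (fun j => dirderiv F (x (phi j)) (z (phi j)) (d (phi j))).

Definition SDA {nx nz} (F : vec nx -> vec nz -> R)
  (x : nat -> vec nx) (z : nat -> vec nz) (d : nat -> vec nx) (alpha : nat -> R) : Prop :=
  forall k, F (x (S k)) (z (S k)) <= F (vadd (x k) (vscal (alpha k) (d k))) (z k).

(* Main.v *)
Require Import Defs.
From Stdlib Require Import Reals Lra Lia List ClassicalEpsilon Classical FunctionalExtensionality.
Open Scope R_scope.

Ltac vext := apply functional_extensionality; intro; unfold vadd, vsub, vscal; ring.

Lemma vsum_ext n (f g : Fin.t n -> R) : (forall i, f i = g i) -> vsum n f = vsum n g.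
Proof. revert f g; induction n as [|n IH]; intros f g H; simpl; auto.
rewrite H, (IH _ (fun i => g (Fin.FS i))); auto. Qed.

Lemma vsum_plus n (f g : Fin.t n -> R) : vsum n (fun i => f i + g i) = vsum n f + vsum n g.
Proof. revert f g; induction n as [|n IH]; intros f g; simpl. ring.
rewrite (IH (fun i => f (Fin.FS i)) (fun i => g (Fin.FS i))); ring. Qed.

Lemma vsum_scal n a (f : Fin.t n -> R) : vsum n (fun i => a * f i) = a * vsum n f.
Proof. revert f; induction n as [|n IH]; intros f; simpl. ring.
rewrite (IH (fun i => f (Fin.FS i))); ring. Qed.

Lemma vsum_nonneg n (f : Fin.t n -> R) : (forall i, 0 <= f i) -> 0 <= vsum n f.
Proof. revert f; induction n as [|n IH]; intros f H; simpl. lra.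
assert (0 <= vsum n (fun i => f (Fin.FS i))) by (apply IH; intro; apply H).
specialize (H Fin.F1). lra. Qed.

Section V.
Context {n : nat}.

Lemma vdot_comm (u v : vec n) : vdot u v = vdot v u.
Proof. unfold vdot; apply vsum_ext; intro; ring. Qed.
Lemma vdot_nonneg (u : vec n) : 0 <= vdot u u.
Proof. unfold vdot; apply vsum_nonneg; intro; apply Rle_0_sqr. Qed.
Lemma vdot_addl (u v w : vec n) : vdot (vadd u v) w = vdot u w + vdot v w.
Proof. unfold vdot, vadd. rewrite <- vsum_plus; apply vsum_ext; intro; ring. Qed.
Lemma vdot_scall a (u w : vec n) : vdot (vscal a u) w = a * vdot u w.
Proof. unfold vdot, vscal. rewrite <- vsum_scal; apply vsum_ext; intro; ring. Qed.
Lemma vdot_subl (u v w : vec n) : vdot (vsub u v) w = vdot u w - vdot v w.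
Proof. unfold vdot, vsub. replace (vsum n (fun i => u i * w i) - vsum n (fun i => v i * w i))
  with (vsum n (fun i => u i * w i) + (-1) * vsum n (fun i => v i * w i)) by ring.
rewrite <- vsum_scal, <- vsum_plus; apply vsum_ext; intro; ring. Qed.
Lemma vdot_addr (u v w : vec n) : vdot w (vadd u v) = vdot w u + vdot w v.
Proof. rewrite !(vdot_comm w); apply vdot_addl. Qed.
Lemma vdot_scalr a (u w : vec n) : vdot w (vscal a u) = a * vdot w u.
Proof. rewrite !(vdot_comm w); apply vdot_scall. Qed.
Lemma vdot_zero (w : vec n) : vdot w (fun _ => 0) = 0.
Proof. replace (fun _ : Fin.t n => 0) with (vscal 0 w) by vext. rewrite vdot_scalr; ring. Qed.

Lemma quad_disc a b c : 0 <= c -> (forall t, 0 <= a - 2*b*t + c*(t*t)) -> b*b <= a*c.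
Proof. intros Hc H. destruct (Req_dec c 0) as [E|E].
- subst c. destruct (Req_dec b 0) as [Eb|Eb]. rewrite Eb; ring_simplify; lra.
  specialize (H ((a+1)/(2*b))). exfalso.
  assert (a - 2*b*((a+1)/(2*b)) + 0*((a+1)/(2*b)*((a+1)/(2*b))) = -1) by (field; auto).
  lra.
- specialize (H (b/c)). assert (0 < c) by lra.
  assert (a - 2*b*(b/c) + c*(b/c*(b/c)) = a - b*b/c) by (field; lra).
  rewrite H1 in H. assert (b*b/c <= a) by lra.
  apply Rmult_le_compat_r with (r:=c) in H2; [|lra].
  replace (b*b/c*c) with (b*b) in H2 by (field; lra). lra.
Qed.

Lemma cauchy_schwarz (u v : vec n) : vdot u v * vdot u v <= vdot u u * vdot v v.
Proof. apply quad_disc. apply vdot_nonneg. intro t.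
assert (E : vdot (vsub u (vscal t v)) (vsub u (vscal t v)) = vdot u u - 2 * vdot u v * t + vdot v v * (t*t)).
{ replace (vsub u (vscal t v)) with (vadd u (vscal (-t) v)) by vext.
  rewrite !vdot_addl, !vdot_addr, !vdot_scall, !vdot_scalr. rewrite (vdot_comm v u); ring. }
rewrite <- E; apply vdot_nonneg. Qed.

Lemma vnorm_nonneg (u : vec n) : 0 <= vnorm u.
Proof. apply sqrt_pos. Qed.
Lemma vnorm_sq (u : vec n) : vnorm u * vnorm u = vdot u u.
Proof. apply sqrt_sqrt, vdot_nonneg. Qed.

Lemma sqrt_le_of A B : 0 <= A -> 0 <= B -> A <= B * B -> sqrt A <= B.
Proof. intros. rewrite <- (sqrt_square B); auto. apply sqrt_le_1_alt; auto. Qed.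

Lemma vdot_abs (u v : vec n) : Rabs (vdot u v) <= vnorm u * vnorm v.
Proof. rewrite <- (sqrt_square (Rabs (vdot u v))) by apply Rabs_pos.
  unfold vnorm. rewrite <- sqrt_mult_alt by apply vdot_nonneg.
  apply sqrt_le_1_alt. rewrite <- Rabs_mult, Rabs_right by (apply Rle_ge, Rle_0_sqr).
  apply cauchy_schwarz. Qed.

Lemma vdot_le (u v : vec n) : vdot u v <= vnorm u * vnorm v.
Proof. pose proof (vdot_abs u v). pose proof (Rle_abs (vdot u v)). lra. Qed.

Lemma vnorm_add (u v : vec n) : vnorm (vadd u v) <= vnorm u + vnorm v.
Proof. unfold vnorm at 1. apply sqrt_le_of. apply vdot_nonneg.
  pose proof (vnorm_nonneg u); pose proof (vnorm_nonneg v); lra.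
  rewrite vdot_addl, !vdot_addr. pose proof (vdot_le u v). rewrite (vdot_comm v u).
  pose proof (vnorm_sq u); pose proof (vnorm_sq v). nra. Qed.

Lemma vnorm_scal a (u : vec n) : vnorm (vscal a u) = Rabs a * vnorm u.
Proof. unfold vnorm. rewrite vdot_scall, vdot_scalr, <- Rmult_assoc, sqrt_mult_alt.
  rewrite <- sqrt_Rsqr_abs; reflexivity. apply Rle_0_sqr. Qed.

Lemma Rabs_m1 : Rabs (-1) = 1.
Proof. rewrite Rabs_left; lra. Qed.
Lemma vsub_addE (u v : vec n) : vsub u v = vadd u (vscal (-1) v).
Proof. vext. Qed.
Lemma vnorm_sub_le (u v : vec n) : vnorm (vsub u v) <= vnorm u + vnorm v.
Proof. rewrite vsub_addE. eapply Rle_trans. apply vnorm_add. rewrite vnorm_scal, Rabs_m1. lra. Qed.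
Lemma vnorm_sub_sym (u v : vec n) : vnorm (vsub u v) = vnorm (vsub v u).
Proof. replace (vsub v u) with (vscal (-1) (vsub u v)) by vext. rewrite vnorm_scal, Rabs_m1. ring. Qed.
Lemma vnorm_tri (a b c : vec n) : vnorm (vsub a c) <= vnorm (vsub a b) + vnorm (vsub b c).
Proof. replace (vsub a c) with (vadd (vsub a b) (vsub b c)) by vext. apply vnorm_add. Qed.
Lemma vnorm_zero : vnorm (fun _ : Fin.t n => 0) = 0.
Proof. unfold vnorm. rewrite vdot_zero. apply sqrt_0. Qed.
Lemma vnorm_subxx (u : vec n) : vnorm (vsub u u) = 0.
Proof. replace (vsub u u) with (fun _ : Fin.t n => 0) by vext. apply vnorm_zero. Qed.
End V.

Lemma pnorm_l {nx nz} (a : vec nx) (b : vec nz) : vnorm a <= pnorm a b.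
Proof. apply sqrt_le_1_alt. pose proof (vdot_nonneg b); lra. Qed.
Lemma pnorm_r {nx nz} (a : vec nx) (b : vec nz) : vnorm b <= pnorm a b.
Proof. apply sqrt_le_1_alt. pose proof (vdot_nonneg a); lra. Qed.
Lemma pnorm_le {nx nz} (a : vec nx) (b : vec nz) : pnorm a b <= vnorm a + vnorm b.
Proof. apply sqrt_le_of. pose proof (vdot_nonneg a); pose proof (vdot_nonneg b); lra.
  pose proof (vnorm_nonneg a); pose proof (vnorm_nonneg b); lra.
  pose proof (vnorm_sq a); pose proof (vnorm_sq b);
  pose proof (vnorm_nonneg a); pose proof (vnorm_nonneg b); nra. Qed.



Section A.
Context {nx nz : nat} (F : vec nx -> vec nz -> R) (gx : vec nx -> vec nz -> vec nx)
  (gz : vec nx -> vec nz -> vec nz).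
Hypothesis Hd : forall x z eps, 0 < eps -> exists delta, 0 < delta /\
       forall hx hz, pnorm hx hz < delta ->
         Rabs (F (vadd x hx) (vadd z hz) - F x z - vdot (gx x z) hx - vdot (gz x z) hz)
           <= eps * pnorm hx hz.
Hypothesis Hc : forall x z eps, 0 < eps -> exists delta, 0 < delta /\
       forall x' z', pnorm (vsub x' x) (vsub z' z) < delta ->
         vnorm (vsub (gx x' z') (gx x z)) < eps /\
         vnorm (vsub (gz x' z') (gz x z)) < eps.

Lemma g_cont x z eps : 0 < eps -> exists delta, 0 < delta /\ forall x' z',
  vnorm (vsub x' x) < delta -> vnorm (vsub z' z) < delta ->
  vnorm (vsub (gx x' z') (gx x z)) < eps.
Proof. intros He. destruct (Hc x z eps He) as [dl [Hdl H]].
exists (dl/2); split; [lra|]. intros x' z' H1 H2. apply H.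
pose proof (pnorm_le (vsub x' x) (vsub z' z)). lra. Qed.

Lemma F_cont x z eps : 0 < eps -> exists delta, 0 < delta /\ forall x' z',
  vnorm (vsub x' x) < delta -> vnorm (vsub z' z) < delta ->
  Rabs (F x' z' - F x z) < eps.
Proof. intros He. destruct (Hd x z 1 Rlt_0_1) as [dl [Hdl H]].
set (K := vnorm (gx x z) + vnorm (gz x z) + 2).
assert (HK : 0 < K) by (unfold K; pose proof (vnorm_nonneg (gx x z)); pose proof (vnorm_nonneg (gz x z)); lra).
exists (Rmin (dl/2) (eps/K)); split. apply Rmin_glb_lt; [lra| apply Rdiv_lt_0_compat; lra].
intros x' z' H1 H2.
pose proof (Rmin_l (dl/2) (eps/K)). pose proof (Rmin_r (dl/2) (eps/K)).
set (hx := vsub x' x) in *. set (hz := vsub z' z) in *.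
assert (Ex : vadd x hx = x') by (unfold hx; vext). assert (Ez : vadd z hz = z') by (unfold hz; vext).
pose proof (pnorm_le hx hz) as Hp.
specialize (H hx hz ltac:(lra)). rewrite Ex, Ez in H.
pose proof (vdot_abs (gx x z) hx). pose proof (vdot_abs (gz x z) hz).
pose proof (vnorm_nonneg hx). pose proof (vnorm_nonneg hz).
pose proof (vnorm_nonneg (gx x z)). pose proof (vnorm_nonneg (gz x z)).
set (m := Rmin (dl/2) (eps/K)) in *.
assert (Rabs (F x' z' - F x z) <= vnorm (gx x z) * vnorm hx + vnorm (gz x z) * vnorm hz + (vnorm hx + vnorm hz)).
{ revert H. set (A := F x' z' - F x z). set (p := vdot (gx x z) hx). set (q := vdot (gz x z) hz).
  intros H. assert (Rabs A <= Rabs (A - p - q) + Rabs p + Rabs q).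
  { replace A with ((A - p - q) + p + q) at 1 by ring.
    eapply Rle_trans. apply Rabs_triang. pose proof (Rabs_triang (A-p-q) p). lra. }
  unfold A, p, q in *. lra. }
assert (vnorm (gx x z) * vnorm hx + vnorm (gz x z) * vnorm hz + (vnorm hx + vnorm hz) < K * m).
{ unfold K. assert (vnorm (gx x z) * vnorm hx <= vnorm (gx x z) * m) by (apply Rmult_le_compat_l; lra).
  assert (vnorm (gz x z) * vnorm hz <= vnorm (gz x z) * m) by (apply Rmult_le_compat_l; lra). lra. }
assert (K * m <= eps). { assert (K * (eps/K) = eps) by (field; lra). 
  assert (K * m <= K * (eps/K)) by (apply Rmult_le_compat_l; lra). lra. }
lra. Qed.

Lemma is_dd x z d : is_dirderiv F x z d (vdot (gx x z) d).
Proof. intros eps He. set (N := vnorm d + 1).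
assert (HN : 0 < N) by (unfold N; pose proof (vnorm_nonneg d); lra).
destruct (Hd x z (eps/(2*N)) ltac:(apply Rdiv_lt_0_compat; lra)) as [dl [Hdl H]].
exists (dl/N); split. apply Rdiv_lt_0_compat; lra.
intros a [Ha1 Ha2]. specialize (H (vscal a d) (fun _ => 0)).
assert (Hp : pnorm (vscal a d) (fun _ : Fin.t nz => 0) <= a * vnorm d).
{ eapply Rle_trans. apply pnorm_le. rewrite vnorm_zero, vnorm_scal, Rabs_right; lra. }
assert (a * N < dl). { apply Rmult_lt_compat_r with (r:=N) in Ha2; auto.
  replace (dl/N*N) with dl in Ha2 by (field; lra). lra. }
assert (a * vnorm d < dl) by (unfold N in *; lra).
specialize (H ltac:(lra)).
replace (vadd z (fun _ => 0)) with z in H by vext.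
rewrite vdot_zero, vdot_scalr in H.
replace ((F (vadd x (vscal a d)) z - F x z) / a - vdot (gx x z) d) with
  ((F (vadd x (vscal a d)) z - F x z - a * vdot (gx x z) d - 0) / a) by (field; lra).
unfold Rdiv at 1. rewrite Rabs_mult, Rabs_inv, (Rabs_right a) by lra.
apply Rmult_lt_reg_r with (r := a); [lra|]. rewrite Rmult_assoc, Rinv_l, Rmult_1_r by lra.
eapply Rle_lt_trans. apply H.
assert (eps / (2*N) * pnorm (vscal a d) (fun _ : Fin.t nz => 0) <= eps/(2*N) * (a * vnorm d)).
{ apply Rmult_le_compat_l; auto. apply Rlt_le, Rdiv_lt_0_compat; lra. }
assert (eps / (2*N) * (a * vnorm d) < eps * a).
{ replace (eps / (2*N) * (a * vnorm d)) with (eps * a * (vnorm d / (2*N))) by (field; lra).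
  assert (vnorm d / (2*N) < 1). { apply Rmult_lt_reg_r with (r:=2*N). lra.
   replace (vnorm d / (2*N) * (2*N)) with (vnorm d) by (field; lra). unfold N; pose proof (vnorm_nonneg d); lra. }
  assert (0 <= vnorm d / (2*N)) by (apply Rmult_le_pos; [apply vnorm_nonneg| apply Rlt_le, Rinv_0_lt_compat; lra]).
  assert (0 < eps*a) by (apply Rmult_lt_0_compat; lra). rewrite <- (Rmult_1_r (eps*a)) at 2. apply Rmult_lt_compat_l; lra. }
lra. Qed.

Lemma dd_unique x z d l1 l2 : is_dirderiv F x z d l1 -> is_dirderiv F x z d l2 -> l1 = l2.
Proof. intros H1 H2. destruct (Req_dec l1 l2) as [|E]; auto. exfalso.
assert (He : 0 < Rabs (l1 - l2) / 2) by (apply Rdiv_lt_0_compat; [apply Rabs_pos_lt; lra| lra]).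
destruct (H1 _ He) as [d1 [Hd1 K1]]. destruct (H2 _ He) as [d2 [Hd2 K2]].
set (a := Rmin d1 d2 / 2).
assert (0 < a < d1) by (unfold a; pose proof (Rmin_l d1 d2); pose proof (Rmin_glb_lt d1 d2 0); pose proof (Rmin_pos d1 d2 Hd1 Hd2); lra).
assert (0 < a < d2) by (unfold a; pose proof (Rmin_r d1 d2); pose proof (Rmin_pos d1 d2 Hd1 Hd2); lra).
specialize (K1 a H). specialize (K2 a H0).
set (q := (F (vadd x (vscal a d)) z - F x z) / a) in *.
assert (Rabs (l1 - l2) <= Rabs (q - l2) + Rabs (q - l1)).
{ replace (l1 - l2) with ((q - l2) - (q - l1)) by ring. apply Rabs_triang_inv2 || (eapply Rle_trans; [apply Rabs_triang|]; rewrite Rabs_Ropp; lra). }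
lra. Qed.

Lemma dd_eq x z d : dirderiv F x z d = vdot (gx x z) d.
Proof. apply (dd_unique x z d). unfold dirderiv. apply epsilon_spec. exists (vdot (gx x z) d). apply is_dd.
apply is_dd. Qed.

Lemma div_bounds D a L e : 0 < a -> Rabs (D / a - L) < e -> a * (L - e) < D /\ D < a * (L + e).
Proof. intros Ha H. apply Rabs_def2 in H. destruct H.
assert (D = a * (D/a)) by (field; lra). split; rewrite H1; apply Rmult_lt_compat_l; lra. Qed.

Hypothesis Hconv : convex_fun F.

Lemma conv_grad x z d t : 0 < t ->
  F (vadd x (vscal t d)) z - F x z <= t * vdot (gx (vadd x (vscal t d)) z) d.
Proof. intros Ht. set (y := vadd x (vscal t d)). set (G := vdot (gx y z) d).
destruct (Rle_or_lt (F y z - F x z) (t * G)) as [|Hlt]; auto. exfalso.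
set (e := (F y z - F x z)/t - G).
assert (He : 0 < e). { unfold e. apply Rlt_Rminus. apply Rmult_lt_reg_r with (r:=t); auto.
  replace ((F y z - F x z)/t * t) with (F y z - F x z) by (field; lra). lra. }
destruct (is_dd y z (vscal (-1) d) e He) as [dl [Hdl H]].
set (a := Rmin dl t / 2).
assert (Ha : 0 < a < dl) by (unfold a; pose proof (Rmin_l dl t); pose proof (Rmin_pos dl t Hdl Ht); lra).
assert (Ha2 : a < t) by (unfold a; pose proof (Rmin_r dl t); pose proof (Rmin_pos dl t Hdl Ht); lra).
specialize (H a Ha). rewrite vdot_scalr in H. apply div_bounds in H; [|lra]. destruct H as [H _].
set (s := a / t).
assert (Hs : 0 <= s <= 1). { unfold s; split. apply Rlt_le, Rdiv_lt_0_compat; lra.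
  apply Rmult_le_reg_r with (r:=t); auto. replace (a/t*t) with a by (field; lra). lra. }
pose proof (Hconv x z y z s Hs) as C.
replace (vadd (vscal s x) (vscal (1 - s) y)) with (vadd y (vscal a (vscal (-1) d))) in C.
2:{ unfold y, s. apply functional_extensionality; intro i; unfold vadd, vscal. field. lra. }
replace (vadd (vscal s z) (vscal (1 - s) z)) with z in C by vext.
fold G in H.
assert (a * (-1 * G - e) = s * (F x z - F y z)).
{ unfold e, s. field. lra. }
lra. Qed.
End A.

Lemma ball_open {n} (p : vec n) r : is_open (fun q => vnorm (vsub q p) < r).
Proof. intros q Hq. exists (r - vnorm (vsub q p)); split; [lra|].
intros q' H. pose proof (vnorm_tri q' q p). lra. Qed.

Lemma nat_above (y : R) : exists k : nat, y < INR k.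
Proof. destruct (Rle_or_lt y 0). exists 1%nat; simpl; lra.
destruct (archimed_cor1 (/ y)) as [N [H1 H2]]. apply Rinv_0_lt_compat; lra.
exists N. apply lt_INR in H2. simpl in H2.
destruct (Rle_or_lt (INR N) y) as [Hc|Hc]; auto.
pose proof (Rinv_le_contravar _ _ H2 Hc). lra. Qed.

Lemma compact_bounded {n} (S : vec n -> Prop) : is_compact S ->
  exists B, 0 <= B /\ forall p, S p -> vnorm p <= B.
Proof. intros HS.
destruct (HS nat (fun k q => vnorm q < INR k)) as [l Hl].
- intros k q Hq. exists (INR k - vnorm q); split; [lra|]. intros q' H.
  replace q' with (vadd (vsub q' q) q) by vext. pose proof (vnorm_add (vsub q' q) q). lra.
- intros p _. apply nat_above.
- exists (INR (fold_right Nat.max 0%nat l)). split. apply pos_INR.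
  intros p Hp. destruct (Hl p Hp) as [i [Hi Hu]].
  assert (i <= fold_right Nat.max 0 l)%nat.
  { clear -Hi. induction l; simpl in *. contradiction. destruct Hi; subst; lia || (specialize (IHl H); lia). }
  apply le_INR in H. lra. Qed.

Lemma strict_incr_ge phi : strict_incr phi -> forall j, (j <= phi j)%nat.
Proof. intros H j. induction j. lia. specialize (H j). lia. Qed.
Lemma strict_incr_mono phi : strict_incr phi -> forall j j', (j <= j')%nat -> (phi j <= phi j')%nat.
Proof. intros H j j' Hj. induction Hj. lia. specialize (H m). lia. Qed.

Lemma cluster_point {n} (S : vec n -> Prop) (u : nat -> vec n) N : is_compact S ->
  (forall j, (N <= j)%nat -> S (u j)) ->
  exists p, S p /\ forall r, 0 < r -> forall M, exists j, (M <= j)%nat /\ vnorm (vsub (u j) p) < r.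
Proof. intros HS Hu. apply NNPP. intros Hno.
set (P := fun t : vec n * R * nat => let '(p, r, M) := t in
   S p /\ 0 < r /\ forall j, (M <= j)%nat -> r <= vnorm (vsub (u j) p)).
destruct (HS {t | P t} (fun i q => let '(p, r, M) := proj1_sig i in vnorm (vsub q p) < r)) as [l Hl].
- intros [[[p r] M] Hi]. simpl. apply ball_open.
- intros p Hp. apply NNPP; intro Hnot. apply Hno. exists p. split; auto.
  intros r Hr M. apply NNPP; intro Hj. apply Hnot.
  assert (Hpr : P (p, r, M)). { split; auto. split; auto. intros j HMj.
    apply Rnot_lt_le. intro. apply Hj. exists j; auto. }
  exists (exist _ _ Hpr). simpl. rewrite vnorm_subxx. auto.
- set (Mx := fold_right (fun (i : {t | P t}) acc => let '(p, r, M) := proj1_sig i in Nat.max M acc) N l).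
  assert (HN : (N <= Mx)%nat). { unfold Mx; clear; induction l as [|[[[p r] M] ?] l IH]; simpl; lia. }
  assert (HM : forall i, In i l -> let '(p, r, M) := proj1_sig i in (M <= Mx)%nat).
  { unfold Mx; clear; induction l as [|[[[p r] M] Hi] l IH]; simpl; intros i Hin. contradiction.
    destruct Hin as [<-|Hin]. simpl; lia. specialize (IH i Hin). destruct (proj1_sig i) as [[? ?] ?]. lia. }
  destruct (Hl (u Mx) (Hu Mx HN)) as [i [Hin Hi]]. specialize (HM i Hin).
  clear Hin. destruct i as [t HP]. destruct t as [[p0 r0] M0]. simpl in *. destruct HP as [_ [_ HP]].
  specialize (HP Mx HM). lra.
Qed.

Lemma cluster_subseq {n} (K0 : vec n -> Prop) (u : nat -> vec n) N : is_compact K0 ->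
  (forall j, (N <= j)%nat -> K0 (u j)) ->
  exists p psi, K0 p /\ strict_incr psi /\ forall eps, 0 < eps -> exists M, forall j, (M <= j)%nat ->
     vnorm (vsub (u (psi j)) p) < eps.
Proof. intros HS Hu. destruct (cluster_point K0 u N HS Hu) as [p [Hp Hc]].
assert (H : forall M k : nat, exists j, (M <= j)%nat /\ vnorm (vsub (u j) p) < / (INR k + 1)).
{ intros M k. apply Hc. apply Rinv_0_lt_compat. pose proof (pos_INR k); lra. }
set (ch := fun M k => proj1_sig (constructive_indefinite_description _ (H M k))).
assert (Hch : forall M k, (M <= ch M k)%nat /\ vnorm (vsub (u (ch M k)) p) < / (INR k + 1)).
{ intros M k. unfold ch. destruct (constructive_indefinite_description _ (H M k)); auto. }
set (psi := fix f (j : nat) : nat := match j with O => ch 0%nat 0%nat | S j' => ch (S (f j')) (S j') end).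
exists p, psi. split; auto. split.
- intro j. simpl. destruct (Hch (S (psi j)) (S j)). lia.
- intros eps He. destruct (archimed_cor1 eps He) as [K [HK HK0]]. exists K. intros j Hj.
  assert (vnorm (vsub (u (psi j)) p) < / (INR j + 1)).
  { destruct j; simpl; [apply Hch | apply Hch]. }
  assert (/ (INR j + 1) <= / INR K).
  { apply Rinv_le_contravar. apply lt_0_INR; lia. apply le_INR in Hj. lra. }
  lra.
Qed.

Theorem lemma6 (nx nz : nat) (F : vec nx -> vec nz -> R)
  (X : vec nx -> Prop) (Z : vec nz -> Prop) (beta sigma : R)
  (x : nat -> vec nx) (z : nat -> vec nz) (d : nat -> vec nx) (alpha : nat -> R) :
  convex_fun F -> cont_diff F ->
  is_convex_set X -> is_compact X ->
  is_closed Z -> is_convex_set Z ->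
  (forall xx, X xx -> inf_compact (F xx) Z) ->
  0 < beta < 1 -> 0 < sigma < 1 ->
  (forall k, X (x k)) -> (forall k, Z (z k)) ->
  (forall k, armijo_step F beta sigma (x k) (z k) (d k) (alpha k)) ->
  DA F X x z d -> GRA F X x z d -> SDA F x z d alpha ->
  (exists xb zb, is_limit_point x z xb zb) /\
  (forall xb zb, is_limit_point x z xb zb ->
     forall db, X (vadd xb db) -> dirderiv F xb zb db >= 0).
Proof.
intros Hconv [gx [gz [Hd Hc]]] HXc HXk HZcl HZc Hinf Hb Hs HX HZ Harm HDA HGRA HSDA.
pose proof (dd_eq F gx gz Hd) as Hdd.
set (f := fun k => F (x k) (z k)).
assert (Hapos : forall k, 0 < alpha k).
{ intro k. destruct (Harm k) as [m [-> _]]. apply pow_lt; lra. }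
assert (Hstep : forall k, f (S k) <= f k + alpha k * sigma * dirderiv F (x k) (z k) (d k)).
{ intro k. destruct (Harm k) as [m [_ [Hcond _]]]. unfold armijo_cond in Hcond.
  pose proof (HSDA k). unfold f. lra. }
assert (Hdecr : forall k, f (S k) <= f k).
{ intro k. pose proof (Hstep k). destruct (HDA k) as [_ HD].
  assert (0 < alpha k * sigma) by (apply Rmult_lt_0_compat; [apply Hapos| lra]).
  assert (alpha k * sigma * dirderiv F (x k) (z k) (d k) < 0).
  { rewrite <- (Rmult_0_r (alpha k * sigma)). apply Rmult_lt_compat_l; auto. }
  lra. }
assert (Hmono : forall k m, (k <= m)%nat -> f m <= f k).
{ intros k m Hkm. induction Hkm. lra. pose proof (Hdecr m). lra. }
split.
- destruct (cluster_subseq X x 0 HXk (fun j _ => HX j)) as [xb [phi [HXb [Hphi Hxconv]]]].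
  set (w := z 0%nat).
  destruct (F_cont F gx gz Hd xb w 1 Rlt_0_1) as [d1 [Hd1 HF1]].
  destruct (Hxconv d1 Hd1) as [M1 HM1].
  set (l := 1/2 * f 0%nat + 1/2 * (F xb w + 1)).
  set (v := fun j => vadd (vscal (1/2) (z (phi j))) (vscal (1 - 1/2) w)).
  assert (HK : forall j, (M1 <= j)%nat -> (fun zz => Z zz /\ F xb zz <= l) (v j)).
  { intros j Hj. split. unfold v. apply HZc; [apply HZ | apply HZ | lra].
    set (x2 := vadd (vscal 2 xb) (vscal (-1) (x (phi j)))).
    assert (E : vadd (vscal (1/2) (x (phi j))) (vscal (1 - 1/2) x2) = xb).
    { unfold x2; apply functional_extensionality; intro i; unfold vadd, vscal; field. }
    pose proof (Hconv (x (phi j)) (z (phi j)) x2 w (1/2) ltac:(lra)) as C.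
    rewrite E in C. fold (v j) in C.
    assert (F x2 w < F xb w + 1).
    { assert (Rabs (F x2 w - F xb w) < 1). { apply HF1.
        replace (vsub x2 xb) with (vsub xb (x (phi j))) by (unfold x2; vext).
        rewrite vnorm_sub_sym. apply HM1; auto. rewrite vnorm_subxx; lra. }
      pose proof (Rle_abs (F x2 w - F xb w)). lra. }
    pose proof (Hmono 0%nat (phi j) ltac:(lia)). unfold f in *. unfold l. lra. }
  destruct (cluster_subseq _ v M1 (Hinf xb HXb l) HK) as [vb [psi [_ [Hpsi Hvconv]]]].
  exists xb, (vadd (vscal 2 vb) (vscal (-1) w)), (fun j => phi (psi j)). split.
  + intro j. pose proof (Hpsi j). pose proof (Hphi (psi j)).
    pose proof (strict_incr_mono phi Hphi (S (psi j)) (psi (S j)) ltac:(lia)). lia.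
  + intros eps He. destruct (Hxconv (eps/2) ltac:(lra)) as [M2 HM2].
    destruct (Hvconv (eps/4) ltac:(lra)) as [M3 HM3].
    exists (Nat.max M2 M3). intros j Hj. pose proof (strict_incr_ge psi Hpsi j).
    eapply Rle_lt_trans. apply pnorm_le.
    assert (vnorm (vsub (x (phi (psi j))) xb) < eps/2) by (apply HM2; lia).
    replace (vsub (z (phi (psi j))) (vadd (vscal 2 vb) (vscal (-1) w))) with (vscal 2 (vsub (v (psi j)) vb)).
    2:{ unfold v; apply functional_extensionality; intro i; unfold vadd, vsub, vscal; field. }
    rewrite vnorm_scal, Rabs_right by lra.
    assert (vnorm (vsub (v (psi j)) vb) < eps/4) by (apply HM3; lia). lra.
- intros xb zb [phi [Hphi Hconvp]] db HXdb. apply Rnot_lt_ge; intro Hneg.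
  destruct (HGRA phi xb zb Hphi Hconvp (ex_intro _ db (conj HXdb Hneg))) as [c [Hc0 [N1 HN1]]].
  set (Fb := F xb zb).
  assert (Hcomp : forall e, 0 < e -> exists M, forall j, (M <= j)%nat ->
     vnorm (vsub (x (phi j)) xb) < e /\ vnorm (vsub (z (phi j)) zb) < e).
  { intros e He. destruct (Hconvp e He) as [M HM]. exists M. intros j Hj. specialize (HM j Hj).
    pose proof (pnorm_l (vsub (x (phi j)) xb) (vsub (z (phi j)) zb)).
    pose proof (pnorm_r (vsub (x (phi j)) xb) (vsub (z (phi j)) zb)). simpl in HM. lra. }
  assert (Hfconv : forall e, 0 < e -> exists M, forall j, (M <= j)%nat -> Rabs (f (phi j) - Fb) < e).
  { intros e He. destruct (F_cont F gx gz Hd xb zb e He) as [dl [Hdl HF]].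
    destruct (Hcomp dl Hdl) as [M HM]. exists M. intros j Hj. destruct (HM j Hj). apply HF; auto. }
  assert (Hge : forall k, Fb <= f k).
  { intro k. apply Rnot_lt_le; intro Hlt. destruct (Hfconv (Fb - f k) ltac:(lra)) as [M HM].
    specialize (HM (Nat.max M k) ltac:(lia)). pose proof (strict_incr_ge phi Hphi (Nat.max M k)).
    pose proof (Hmono k (phi (Nat.max M k)) ltac:(lia)).
    pose proof (Rle_abs (Fb - f (phi (Nat.max M k)))). rewrite Rabs_minus_sym in HM. lra. }
  assert (Halpha : forall e, 0 < e -> exists M, forall j, (M <= j)%nat -> alpha (phi j) < e).
  { intros e He. assert (Hsc : 0 < sigma * (-c)) by (apply Rmult_lt_0_compat; lra).
    destruct (Hfconv (e * (sigma * (-c))) ltac:(apply Rmult_lt_0_compat; lra)) as [M HM].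
    exists (Nat.max M N1). intros j Hj. specialize (HM j ltac:(lia)). specialize (HN1 j ltac:(lia)).
    simpl in HN1. set (k := phi j) in *. pose proof (Hstep k). pose proof (Hge (S k)).
    pose proof (Hapos k).
    assert (alpha k * sigma * dirderiv F (x k) (z k) (d k) <= alpha k * sigma * c).
    { apply Rmult_le_compat_l; auto. apply Rlt_le, Rmult_lt_0_compat; lra. }
    pose proof (Rle_abs (f k - Fb)).
    apply Rmult_lt_reg_r with (r := sigma * (-c)); auto. nra. }
  destruct (compact_bounded X HXk) as [B [HB0 HB]].
  assert (Hdb : forall k, vnorm (d k) <= 2*B + 1).
  { intro k. replace (d k) with (vsub (vadd (x k) (d k)) (x k)) by vext.
    pose proof (vnorm_sub_le (vadd (x k) (d k)) (x k)). destruct (HDA k) as [HXd _].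
    pose proof (HB _ HXd). pose proof (HB _ (HX k)). lra. }
  set (eta := (1 - sigma) * (-c) / 4).
  assert (Heta : 0 < eta) by (unfold eta; apply Rdiv_lt_0_compat; [apply Rmult_lt_0_compat|]; lra).
  set (eg := eta / (2*B+1)).
  assert (Heg : 0 < eg) by (unfold eg; apply Rdiv_lt_0_compat; lra).
  destruct (g_cont gx gz Hc xb zb eg Heg) as [dl [Hdl Hg]].
  destruct (Hcomp (dl/2) ltac:(lra)) as [M3 HM3].
  destruct (Halpha (beta * (dl / (2 * (2*B+1)))) ltac:(apply Rmult_lt_0_compat; [lra| apply Rdiv_lt_0_compat; lra])) as [M4 HM4].
  destruct (Halpha beta ltac:(lra)) as [M5 HM5].
  set (j := Nat.max (Nat.max N1 M3) (Nat.max M4 M5)).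
  specialize (HN1 j ltac:(unfold j; lia)). specialize (HM3 j ltac:(unfold j; lia)).
  specialize (HM4 j ltac:(unfold j; lia)). specialize (HM5 j ltac:(unfold j; lia)).
  simpl in HN1. set (k := phi j) in *. destruct HM3 as [HM3x HM3z].
  destruct (Harm k) as [m [Ham [_ Hfail]]].
  destruct m as [|m']. { simpl in Ham. lra. }
  set (t := beta ^ m').
  assert (Hat : alpha k = beta * t) by (rewrite Ham; reflexivity).
  assert (Ht : 0 < t) by (apply pow_lt; lra).
  specialize (Hfail m' ltac:(lia)). fold t in Hfail. unfold armijo_cond in Hfail.
  rewrite Hdd in Hfail, HN1.
  pose proof (conv_grad F gx gz Hd Hconv (x k) (z k) (d k) t Ht) as Hcg.
  set (y := vadd (x k) (vscal t (d k))) in *.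
  set (G0 := vdot (gx (x k) (z k)) (d k)) in *. set (G1 := vdot (gx y (z k)) (d k)) in *.
  assert (HG : sigma * G0 < G1).
  { apply Rmult_lt_reg_l with (r := t); auto. lra. }
  assert (Htd : t * vnorm (d k) < dl / 2).
  { assert (t < dl / (2 * (2*B+1))). { apply Rmult_lt_reg_l with (r := beta); lra. }
    assert (t * vnorm (d k) <= t * (2*B+1)) by (apply Rmult_le_compat_l; [lra| apply Hdb]).
    assert (t * (2*B+1) < dl / (2 * (2*B+1)) * (2*B+1)) by (apply Rmult_lt_compat_r; lra).
    replace (dl / (2 * (2*B+1)) * (2*B+1)) with (dl/2) in H1 by (field; lra). lra. }
  assert (Hy : vnorm (vsub y xb) < dl).
  { replace (vsub y xb) with (vadd (vsub (x k) xb) (vscal t (d k))) by (unfold y; vext).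
    eapply Rle_lt_trans. apply vnorm_add. rewrite vnorm_scal, Rabs_right by lra. lra. }
  pose proof (Hg y (z k) Hy ltac:(lra)) as Hg1.
  pose proof (Hg (x k) (z k) ltac:(lra) ltac:(lra)) as Hg0.
  assert (HGd : G1 - G0 <= 2 * eta).
  { unfold G1, G0. rewrite <- vdot_subl.
    eapply Rle_trans. apply vdot_le.
    pose proof (vnorm_tri (gx y (z k)) (gx xb zb) (gx (x k) (z k))).
    rewrite (vnorm_sub_sym (gx xb zb)) in H.
    assert (vnorm (vsub (gx y (z k)) (gx (x k) (z k))) <= 2 * eg) by lra.
    pose proof (vnorm_nonneg (d k)). pose proof (Hdb k).
    apply Rle_trans with (2 * eg * (2*B+1)). apply Rmult_le_compat; auto; apply vnorm_nonneg.
    unfold eg. right; field; lra. }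
  unfold eta in HGd.
  assert (0 <= (1 - sigma) * (c - G0)) by (apply Rmult_le_pos; lra).
  nra.
Qed.
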